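(* There is a universal constant $C>0$ such that the following holds. Let $U=(u^1,\dots,u^m)$ be a viscosity solution of the vectorial one-phase problem in $B_1\subset\mathbb R^n$ and let $\varepsilon>0$ be such that $$|U-f^1x_n^+|\le\varepsilon\quad\text{in } B_1,\qquad |U|\equiv0\quad\text{in } B_1\cap\{x_n<-\varepsilon\},$$ where $f^1=(1,0,\dots,0)\in\mathbb R^m$. Then (i) for $i=2,\dots,m$, $|u^i|\le C\varepsilon(x_n+\varepsilon)^+$ in $B_{3/4}$; (ii) $x_n-\varepsilon\le u^1\le|U|\le(x_n+2\varepsilon)^+$ in $B_1$.
   Context: $t^+=\max\{t,0\}$; $x_n$ is the last coordinate of $x\in\mathbb R^n$. Definition (viscosity solution): $U\in C(\Omega,\mathbb R^m)$ is a viscosity solution of $\Delta U=0$ in $\Omega(U):=\Omega\cap\{|U|>0\}$, $|\nabla|U||=1$ on $F(U):=\Omega\cap\partial\Omega(U)$, if each component $u^i$ is harmonic in $\Omega(U)$ and, for every $x_0\in F(U)$ and every $\varphi\in C^2$ near $x_0$ with $|\nabla\varphi(x_0)|\ne0$: (i) if $|\nabla\varphi(x_0)|>1$, then for every unit vector $f\in\mathbb R^m$, $\langle U,f\rangle$ cannot be touched by below by $\varphi$ at $x_0$ (i.e. there is no such $\varphi$ with $\varphi(x_0)=\langle U,f\rangle(x_0)$ and $\varphi\le\langle U,f\rangle$ near $x_0$); (ii) if $|\nabla\varphi(x_0)|<1$, then $|U|$ cannot be touched by above by $\varphi$ at $x_0$. Universal constants depend only on $n$ and $m$. *)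

(* Defs.v *)
From Stdlib Require Import Reals Lra.
Open Scope R_scope.

(* Points of R^n are represented as functions nat -> R; a point lies in R^n
   when all coordinates of index >= n vanish.  Coordinates are 0-based:
   x_1,...,x_n of the paper are x 0, ..., x (n-1). *)
Definition pt := nat -> R.
Definition inRn (n : nat) (x : pt) : Prop := forall i, (n <= i)%nat -> x i = 0.

Fixpoint rsum (k : nat) (g : nat -> R) : R :=
  match k with O => 0 | S k' => rsum k' g + g k' end.

Definition norm (k : nat) (v : pt) : R := sqrt (rsum k (fun i => v i ^ 2)).
Definition dot (k : nat) (v w : pt) : R := rsum k (fun i => v i * w i).
Definition dist (n : nat) (x y : pt) : R := norm n (fun i => x i - y i).

Definition ball (n : nat) (c : pt) (r : R) (x : pt) : Prop :=
  inRn n x /\ dist n x c < r.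
Definition origin : pt := fun _ => 0.
Definition Bn (n : nat) (r : R) : pt -> Prop := ball n origin r.

Definition interior (n : nat) (S : pt -> Prop) (x : pt) : Prop :=
  inRn n x /\ exists r, r > 0 /\ forall y, ball n x r y -> S y.
Definition closure (n : nat) (S : pt -> Prop) (x : pt) : Prop :=
  inRn n x /\ forall r, r > 0 -> exists y, ball n x r y /\ S y.
Definition boundary (n : nat) (S : pt -> Prop) (x : pt) : Prop :=
  closure n S x /\ ~ interior n S x.

Definition shift (x : pt) (i : nat) (t : R) : pt :=
  fun j => if Nat.eqb j i then x j + t else x j.
Definition has_partial (f : pt -> R) (x : pt) (i : nat) (l : R) : Prop :=
  derivable_pt_lim (fun t => f (shift x i t)) 0 l.

Definition cont_on (n : nat) (S : pt -> Prop) (f : pt -> R) : Prop :=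
  forall x, S x -> forall e, e > 0 -> exists d, d > 0 /\
    forall y, S y -> dist n y x < d -> Rabs (f y - f x) < e.

Definition C2_with (n : nat) (O : pt -> Prop) (f : pt -> R)
    (D1 : nat -> pt -> R) (D2 : nat -> nat -> pt -> R) : Prop :=
  cont_on n O f /\
  (forall i, (i < n)%nat -> cont_on n O (D1 i)) /\
  (forall i j, (i < n)%nat -> (j < n)%nat -> cont_on n O (D2 i j)) /\
  (forall x, O x -> forall i, (i < n)%nat -> has_partial f x i (D1 i x)) /\
  (forall x, O x -> forall i j, (i < n)%nat -> (j < n)%nat ->
      has_partial (D1 i) x j (D2 i j x)).

Definition harmonic_on (n : nat) (O : pt -> Prop) (f : pt -> R) : Prop :=
  exists D1 D2, C2_with n O f D1 D2 /\
    forall x, O x -> rsum n (fun i => D2 i i x) = 0.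

(* U : R^n -> R^m, components U x j for j < m *)
Definition Uabs (m : nat) (U : pt -> pt) (x : pt) : R := norm m (U x).
Definition pos_set (n m : nat) (U : pt -> pt) (x : pt) : Prop :=
  Bn n 1 x /\ Uabs m U x > 0.
Definition free_bdry (n m : nat) (U : pt -> pt) (x : pt) : Prop :=
  Bn n 1 x /\ boundary n (pos_set n m U) x.

Definition C2_near (n : nat) (phi : pt -> R) (x0 : pt) (D1 : nat -> pt -> R) : Prop :=
  exists r, r > 0 /\ exists D2, C2_with n (ball n x0 r) phi D1 D2.
Definition grad_norm (n : nat) (D1 : nat -> pt -> R) (x : pt) : R :=
  norm n (fun i => D1 i x).

Definition touches_below (n : nat) (phi g : pt -> R) (x0 : pt) : Prop :=
  phi x0 = g x0 /\ exists r, r > 0 /\ forall y, ball n x0 r y -> phi y <= g y.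
Definition touches_above (n : nat) (phi g : pt -> R) (x0 : pt) : Prop :=
  phi x0 = g x0 /\ exists r, r > 0 /\ forall y, ball n x0 r y -> g y <= phi y.

Definition viscosity_solution (n m : nat) (U : pt -> pt) : Prop :=
  (forall j, (j < m)%nat -> cont_on n (Bn n 1) (fun x => U x j)) /\
  (forall j, (j < m)%nat -> harmonic_on n (pos_set n m U) (fun x => U x j)) /\
  (forall x0, free_bdry n m U x0 ->
     forall (phi : pt -> R) (D1 : nat -> pt -> R), C2_near n phi x0 D1 ->
       (grad_norm n D1 x0 > 1 ->
          forall f : pt, norm m f = 1 ->
            ~ touches_below n phi (fun x => dot m (U x) f) x0) /\
       (grad_norm n D1 x0 < 1 -> ~ touches_above n phi (Uabs m U) x0)).

Definition e1 : pt := fun j => if Nat.eqb j 0 then 1 else 0.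

(* Main.v *)
From Stdlib Require Import Reals Lra Lia Classical FunctionalExtensionality.
From mathcomp Require all_boot all_order all_algebra all_classical all_reals all_analysis Rstruct Rstruct_topology.
Require Import Defs.
Set Bullet Behavior "Strict Subproofs".
Open Scope R_scope.

Lemma rsum_ext k f g : (forall i, (i < k)%nat -> f i = g i) -> rsum k f = rsum k g.
Proof. induction k; simpl; intros H; auto. rewrite IHk by (intros; apply H; lia). rewrite H by lia. auto. Qed.

Lemma rsum_le k f g : (forall i, (i < k)%nat -> f i <= g i) -> rsum k f <= rsum k g.
Proof. induction k; simpl; intros H; [lra|]. assert (rsum k f <= rsum k g) by (apply IHk; intros; apply H; lia). assert (f k <= g k) by (apply H; lia). lra. Qed.

Lemma rsum_zero k : rsum k (fun _ => 0) = 0.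
Proof. induction k; simpl; auto; lra. Qed.

Lemma rsum_const k c : rsum k (fun _ => c) = INR k * c.
Proof. induction k; simpl; [lra|]. rewrite IHk. destruct k; simpl; lra. Qed.

Lemma rsum_nonneg k f : (forall i, (i < k)%nat -> 0 <= f i) -> 0 <= rsum k f.
Proof. intros H. rewrite <- (rsum_zero k). apply rsum_le. auto. Qed.

Lemma rsum_ge_term k f j : (forall i, (i < k)%nat -> 0 <= f i) -> (j < k)%nat -> f j <= rsum k f.
Proof.
  induction k; simpl; intros H Hj; [lia|].
  assert (0 <= rsum k f) by (apply rsum_nonneg; intros; apply H; lia).
  destruct (Nat.eq_dec j k).
  - subst. lra.
  - assert (f j <= rsum k f) by (apply IHk; [intros; apply H; lia| lia]).
    assert (0 <= f k) by (apply H; lia). lra.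
Qed.

Lemma rsum_single k f g j : (j < k)%nat -> (forall i, (i < k)%nat -> i <> j -> g i = f i) ->
  rsum k g = rsum k f - f j + g j.
Proof.
  induction k; simpl; intros Hj H; [lia|].
  destruct (Nat.eq_dec j k).
  - subst. rewrite (rsum_ext k g f) by (intros; apply H; lia). lra.
  - rewrite IHk by (try lia; intros; apply H; lia). rewrite (H k) by lia. lra.
Qed.

Lemma rsum_minus k f g : rsum k (fun i => f i - g i) = rsum k f - rsum k g.
Proof. induction k; simpl; [lra|]. rewrite IHk. lra. Qed.

Lemma rsum_pos_exists k f : 0 < rsum k f -> exists i, (i < k)%nat /\ 0 < f i.
Proof.
  induction k; simpl; intros H; [lra|].
  destruct (Rlt_dec 0 (f k)). exists k; split; auto; lia.
  destruct IHk as [i [Hi Hf]]. lra. exists i; split; auto; lia.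
Qed.

Lemma rsum_abs_diff k f g c : (forall i, (i < k)%nat -> Rabs (f i - g i) <= c) ->
  Rabs (rsum k f - rsum k g) <= INR k * c.
Proof.
  rewrite <- rsum_minus, <- rsum_const. induction k; simpl; intros H.
  - rewrite Rabs_R0; lra.
  - eapply Rle_trans. apply Rabs_triang.
    assert (Rabs (rsum k (fun i => f i - g i)) <= rsum k (fun _ => c)) by (apply IHk; intros; apply H; lia).
    assert (Rabs (f k - g k) <= c) by (apply H; lia). lra.
Qed.

Lemma rsum_sq_le k f c : (forall i, (i < k)%nat -> Rabs (f i) <= c) -> rsum k (fun i => f i ^ 2) <= INR k * c ^ 2.
Proof.
  intros H. rewrite <- rsum_const. apply rsum_le. intros i Hi. specialize (H i Hi).
  assert (0 <= Rabs (f i)) by apply Rabs_pos.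
  rewrite <- (pow2_abs (f i)). nra.
Qed.

Lemma sqrt_sq_abs t : sqrt (t ^ 2) = Rabs t.
Proof. rewrite <- sqrt_Rsqr_abs. f_equal. unfold Rsqr. ring. Qed.

Lemma comp_le_norm m v j : (j < m)%nat -> Rabs (v j) <= norm m v.
Proof.
  intros Hj. unfold norm. rewrite <- sqrt_sq_abs. apply sqrt_le_1_alt.
  apply (rsum_ge_term m (fun i => v i ^ 2)); auto. intros; apply pow2_ge_0.
Qed.

Lemma norm_nonneg m v : 0 <= norm m v.
Proof. unfold norm. apply sqrt_pos. Qed.

Lemma sqrt_lt_sq s r : 0 <= s -> 0 < r -> s < r ^ 2 -> sqrt s < r.
Proof.
  intros Hs Hr H. rewrite <- (sqrt_pow2 r) by lra. apply sqrt_lt_1_alt. lra.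
Qed.

Lemma sq_lt_of_sqrt s r : 0 <= s -> sqrt s < r -> s < r ^ 2.
Proof.
  intros Hs H. rewrite <- (pow2_sqrt s) by auto. assert (0 <= sqrt s) by apply sqrt_pos. nra.
Qed.

Lemma sq_le_of_sqrt s r : 0 <= s -> sqrt s <= r -> s <= r ^ 2.
Proof.
  intros Hs H. rewrite <- (pow2_sqrt s) by auto. assert (0 <= sqrt s) by apply sqrt_pos. nra.
Qed.

Lemma shift_shift x j t s : shift (shift x j t) j s = shift x j (t + s).
Proof. apply functional_extensionality. intros i. unfold shift. destruct (Nat.eqb i j); lra. Qed.

Lemma shift_same x j t : shift x j t j = x j + t.
Proof. unfold shift. rewrite Nat.eqb_refl. auto. Qed.

Lemma shift_other x j t i : i <> j -> shift x j t i = x i.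
Proof. intros H. unfold shift. destruct (Nat.eqb_spec i j); [lia|auto]. Qed.

Lemma shift_inRn n x j t : (j < n)%nat -> inRn n x -> inRn n (shift x j t).
Proof. intros Hj H i Hi. rewrite shift_other by lia. auto. Qed.

Lemma dist_shift n x j t : (j < n)%nat -> dist n (shift x j t) x = Rabs t.
Proof.
  intros Hj. unfold dist, norm.
  rewrite (rsum_single n (fun _ => 0) _ j Hj).
  - rewrite rsum_zero, shift_same. rewrite <- sqrt_sq_abs. f_equal. ring.
  - intros i Hi Hij. rewrite shift_other by auto. ring.
Qed.

Lemma dist_coord n x y d : (1 <= n)%nat -> d > 0 -> (forall j, (j < n)%nat -> Rabs (y j - x j) < d) ->
  dist n y x < 2 * INR n * d.
Proof.
  intros Hn Hd H. unfold dist, norm.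
  assert (Hs : rsum n (fun i => (y i - x i) ^ 2) <= INR n * d ^ 2)
    by (apply rsum_sq_le; intros; left; auto).
  assert (HN : 1 <= INR n) by (apply (le_INR 1); lia).
  apply sqrt_lt_sq. apply rsum_nonneg; intros; apply pow2_ge_0. nra. nra.
Qed.

Lemma deriv_translate F t l : derivable_pt_lim (fun s => F (t + s)) 0 l -> derivable_pt_lim F t l.
Proof.
  intros H e He. destruct (H e He) as [d Hd]. exists d. intros h Hh Hhd.
  specialize (Hd h Hh Hhd). rewrite !Rplus_0_l, Rplus_0_r in Hd. auto.
Qed.

Lemma deriv_quad a b c t : derivable_pt_lim (fun s => a + b * s + c * s ^ 2) t (b + 2 * c * t).
Proof.
  assert (H1 : derivable_pt_lim (fun s => a) t 0) by apply derivable_pt_lim_const.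
  assert (H2 : derivable_pt_lim (fun s => b * s) t (b * 1)).
  { apply (derivable_pt_lim_scal (fun s => s)). apply derivable_pt_lim_id. }
  assert (H3 : derivable_pt_lim (fun s => c * s ^ 2) t (c * (INR 2 * t ^ (2 - 1)))).
  { apply (derivable_pt_lim_scal (fun s => s ^ 2)). apply derivable_pt_lim_pow. }
  assert (H := derivable_pt_lim_plus _ _ t _ _ (derivable_pt_lim_plus _ _ t _ _ H1 H2) H3).
  replace (b + 2 * c * t) with (0 + b * 1 + c * (INR 2 * t ^ (2 - 1))) by (simpl; ring).
  exact H.
Qed.

Lemma oneD (g h : R -> R) d L : d > 0 -> L > 0 ->
  (forall t, Rabs t < d -> derivable_pt_lim g t (h t)) ->
  (forall t, Rabs t < d -> g t <= g 0) ->
  derivable_pt_lim h 0 L -> False.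
Proof.
  intros Hd HL Hg Hmax Hh.
  destruct (Hh (L / 2) ltac:(lra)) as [d' Hd'].
  assert (Hq : forall c, c <> 0 -> Rabs c < d' -> (h c - h 0) / c > 0).
  { intros c Hc Hcd. specialize (Hd' c Hc Hcd). rewrite Rplus_0_l in Hd'.
    apply Rabs_def2 in Hd'. lra. }
  assert (Hd'0 := cond_pos d').
  pose (t := Rmin d d' / 2).
  assert (Ht : 0 < t) by (unfold t; assert (0 < Rmin d d') by (apply Rmin_glb_lt; [lra|apply cond_pos]); lra).
  assert (Htd : t < d) by (unfold t; assert (Rmin d d' <= d) by apply Rmin_l; lra).
  assert (Htd' : t < d') by (unfold t; assert (Rmin d d' <= d') by apply Rmin_r; lra).
  destruct (Rle_dec 0 (h 0)) as [H0|H0].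
  - destruct (MVT_cor2 g h 0 t Ht) as [c [Hc1 Hc2]].
    { intros c Hc. apply Hg. rewrite Rabs_right by lra. lra. }
    assert (Hqc := Hq c ltac:(lra) ltac:(rewrite Rabs_right by lra; lra)).
    assert (h c - h 0 > 0).
    { destruct (Rlt_dec 0 (h c - h 0)); auto.
      assert ((h c - h 0) / c <= 0). { unfold Rdiv.
        assert (/ c > 0) by (apply Rinv_0_lt_compat; lra). nra. } lra. }
    assert (g t <= g 0) by (apply Hmax; rewrite Rabs_right; lra).
    assert (h c * (t - 0) > 0) by (apply Rmult_lt_0_compat; lra). lra.
  - destruct (MVT_cor2 g h (- t) 0 ltac:(lra)) as [c [Hc1 Hc2]].
    { intros c Hc. apply Hg. rewrite Rabs_left1 by lra. lra. }
    assert (Hqc := Hq c ltac:(lra) ltac:(rewrite Rabs_left by lra; lra)).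
    assert (h c - h 0 < 0).
    { destruct (Rlt_dec (h c - h 0) 0); auto.
      assert ((h c - h 0) / c <= 0). { unfold Rdiv. 
        assert (/ c < 0) by (apply Rinv_lt_0_compat; lra). nra. } lra. }
    assert (g (- t) <= g 0) by (apply Hmax; rewrite Rabs_left by lra; lra).
    assert (h c * (0 - - t) < 0) by (assert (0 < 0 - - t) by lra; nra). lra.
Qed.


Definition qq (k : nat) := / (16 * INR (S k)).
Definition DD k := / (qq k ^ 2).
Definition BB k := DD k * INR (S k).
Definition AA k := BB k * qq k + / qq k.

Lemma INR_S_pos k : 1 <= INR (S k).
Proof. apply (le_INR 1); lia. Qed.

Lemma qq_pos k : 0 < qq k.
Proof. unfold qq. assert (H := INR_S_pos k). apply Rinv_0_lt_compat. lra. Qed.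

Lemma qq_n k : INR (S k) * qq k = / 16.
Proof. unfold qq. assert (H := INR_S_pos k). field. lra. Qed.

Lemma qq_le k : qq k <= / 16.
Proof. assert (H := INR_S_pos k). assert (H2 := qq_n k). assert (H3 := qq_pos k). nra. Qed.

Lemma DD_q k : DD k * qq k ^ 2 = 1.
Proof. unfold DD. assert (H := qq_pos k). field. lra. Qed.

Lemma DD_pos k : 0 < DD k.
Proof. unfold DD. assert (H := qq_pos k). apply Rinv_0_lt_compat. nra. Qed.

Lemma BB_pos k : 0 < BB k.
Proof. unfold BB. assert (H := DD_pos k). assert (H1 := INR_S_pos k). nra. Qed.

Lemma AA_q k : AA k * qq k - BB k * qq k ^ 2 = 1.
Proof. unfold AA. assert (H := qq_pos k). field. lra. Qed.

Lemma AA_q2 k : AA k - BB k * qq k = / qq k.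
Proof. unfold AA. ring. Qed.

Lemma AA_pos k : 0 < AA k.
Proof. unfold AA. assert (H := qq_pos k). assert (H1 := BB_pos k).
  assert (0 < / qq k) by (apply Rinv_0_lt_compat; lra). nra. Qed.

Lemma AA_ge k : 1 <= AA k * qq k.
Proof. assert (H := AA_q k). assert (H1 := BB_pos k). assert (H2 := qq_pos k). nra. Qed.

Lemma rsum_plus_const k f c : rsum k (fun i => f i + c) = rsum k f + INR k * c.
Proof. rewrite <- rsum_const. induction k; simpl; [lra|]. rewrite IHk. ring. Qed.

Lemma dist_origin n x : dist n x origin = sqrt (rsum n (fun i => x i ^ 2)).
Proof. unfold dist, norm, origin. f_equal. apply rsum_ext. intros. ring. Qed.

Lemma inB1 k y z : Bn (S k) (3/4) y -> inRn (S k) z ->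
  (forall j, (j < S k)%nat -> Rabs (z j - y j) <= 2 * qq k) -> Bn (S k) 1 z.
Proof.
  intros [Hy Hyd] Hz H. split; auto. unfold Bn, ball in *.
  rewrite dist_origin in *.
  set (n := S k) in *.
  assert (HSy : rsum n (fun i => y i ^ 2) < (3/4) ^ 2).
  { apply sq_lt_of_sqrt; auto. apply rsum_nonneg; intros; apply pow2_ge_0. }
  assert (Hq := qq_pos k). assert (Hqn := qq_n k). assert (Hql := qq_le k).
  assert (Hyj : forall j, (j < n)%nat -> Rabs (y j) <= 3/4).
  { intros j Hj. assert (y j ^ 2 <= rsum n (fun i => y i ^ 2)).
    { apply (rsum_ge_term n (fun i => y i ^ 2)); auto. intros; apply pow2_ge_0. }
    rewrite <- (pow2_abs (y j)) in H0. assert (0 <= Rabs (y j)) by apply Rabs_pos. nra. }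
  assert (Hs : rsum n (fun i => z i ^ 2) <= rsum n (fun i => y i ^ 2 + (3 * qq k + 4 * qq k ^ 2))).
  { apply rsum_le. intros j Hj. specialize (H j Hj). specialize (Hyj j Hj).
    assert (Rabs (z j) <= Rabs (y j) + 2 * qq k).
    { replace (z j) with (y j + (z j - y j)) by ring. eapply Rle_trans. apply Rabs_triang. lra. }
    rewrite <- (pow2_abs (z j)). rewrite <- (pow2_abs (y j)).
    assert (0 <= Rabs (z j)) by apply Rabs_pos. assert (0 <= Rabs (y j)) by apply Rabs_pos. nra. }
  rewrite rsum_plus_const in Hs.
  apply sqrt_lt_sq. apply rsum_nonneg; intros; apply pow2_ge_0. lra.
  unfold n in *. nra.
Qed.

Lemma B34_B1 n y : Bn n (3/4) y -> Bn n 1 y.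
Proof. intros [H1 H2]. split; auto. lra. Qed.

Lemma abs_le_inv a q : Rabs a <= q -> - q <= a <= q.
Proof. unfold Rabs; destruct (Rcase_abs a); lra. Qed.

Lemma abs3 a b c : Rabs (a - b + c) <= Rabs a + Rabs b + Rabs c.
Proof. unfold Rabs; destruct (Rcase_abs (a - b + c)), (Rcase_abs a), (Rcase_abs b), (Rcase_abs c); lra. Qed.

Definition la k eps (y : pt) j := if Nat.ltb j k then y j - qq k else - eps.
Definition lb k eps (y : pt) j := if Nat.ltb j k then y j + qq k else - eps + qq k.

Definition boxK (n : nat) (a b : nat -> R) (x : pt) : Prop :=
  inRn n x /\ forall j, (j < n)%nat -> a j <= x j <= b j.

Lemma box_iff k eps y x : boxK (S k) (la k eps y) (lb k eps y) x <->
  inRn (S k) x /\ (forall j, (j < k)%nat -> Rabs (x j - y j) <= qq k) /\ - eps <= x k <= - eps + qq k.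
Proof.
  unfold boxK, la, lb. split.
  - intros [Hx H]. split; auto. split.
    + intros j Hj. specialize (H j ltac:(lia)). apply Nat.ltb_lt in Hj. rewrite Hj in H.
      apply Rabs_le. lra.
    + specialize (H k ltac:(lia)). rewrite Nat.ltb_irrefl in H. auto.
  - intros [Hx [H1 H2]]. split; auto. intros j Hj.
    destruct (Nat.ltb_spec j k).
    + specialize (H1 j H). apply abs_le_inv in H1. lra.
    + replace j with k by lia. auto.
Qed.

Definition wB k eps (y x : pt) :=
  eps * (AA k * (x k + eps) - BB k * (x k + eps) ^ 2 + DD k * rsum k (fun j => (x j - y j) ^ 2)).

Lemma tpart_nonneg k t : 0 <= t <= qq k -> 0 <= AA k * t - BB k * t ^ 2.
Proof.
  intros Ht. assert (H := AA_q2 k). assert (Hq := qq_pos k). assert (HB := BB_pos k).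
  assert (0 < / qq k) by (apply Rinv_0_lt_compat; lra).
  assert (AA k - BB k * t >= 0) by nra. nra.
Qed.

Lemma w_nonneg k eps y x : eps > 0 -> boxK (S k) (la k eps y) (lb k eps y) x -> 0 <= wB k eps y x.
Proof.
  intros He HK. apply box_iff in HK. destruct HK as [_ [_ Hk]].
  unfold wB. assert (H := tpart_nonneg k (x k + eps) ltac:(lra)).
  assert (0 <= rsum k (fun j => (x j - y j) ^ 2)) by (apply rsum_nonneg; intros; apply pow2_ge_0).
  assert (HD := DD_pos k). apply Rmult_le_pos; nra.
Qed.

Lemma w_top k eps y x : eps > 0 -> boxK (S k) (la k eps y) (lb k eps y) x -> x k = - eps + qq k -> eps <= wB k eps y x.
Proof.
  intros He HK Ht. unfold wB. rewrite Ht. replace (- eps + qq k + eps) with (qq k) by ring.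
  rewrite AA_q.
  assert (0 <= rsum k (fun j => (x j - y j) ^ 2)) by (apply rsum_nonneg; intros; apply pow2_ge_0).
  assert (HD := DD_pos k). assert (0 <= DD k * rsum k (fun j => (x j - y j) ^ 2)) by (apply Rmult_le_pos; lra). nra.
Qed.

Lemma w_lat k eps y x j : eps > 0 -> boxK (S k) (la k eps y) (lb k eps y) x -> (j < k)%nat ->
  Rabs (x j - y j) = qq k -> eps <= wB k eps y x.
Proof.
  intros He HK Hj Ha. apply box_iff in HK. destruct HK as [_ [_ Hk]].
  unfold wB. assert (H := tpart_nonneg k (x k + eps) ltac:(lra)).
  assert ((x j - y j) ^ 2 <= rsum k (fun j => (x j - y j) ^ 2)).
  { apply (rsum_ge_term k (fun j => (x j - y j) ^ 2)); auto. intros; apply pow2_ge_0. }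
  rewrite <- pow2_abs, Ha in H0. assert (H1 := DD_q k). assert (HD := DD_pos k).
  assert (1 <= DD k * rsum k (fun j => (x j - y j) ^ 2)) by (rewrite <- H1; apply Rmult_le_compat_l; lra).
  assert (0 <= eps * (AA k * (x k + eps) - BB k * (x k + eps) ^ 2 + DD k * rsum k (fun j => (x j - y j) ^ 2) - 1)) by (apply Rmult_le_pos; lra).
  nra.
Qed.

Lemma sq_diff_bound a b q d : Rabs a <= q -> Rabs b <= q -> Rabs (a - b) < d -> Rabs (a ^ 2 - b ^ 2) <= 2 * q * d.
Proof.
  intros Ha Hb Hd. replace (a ^ 2 - b ^ 2) with ((a - b) * (a + b)) by ring.
  rewrite Rabs_mult. assert (Rabs (a + b) <= 2 * q) by (eapply Rle_trans; [apply Rabs_triang|lra]).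
  assert (0 <= Rabs (a - b)) by apply Rabs_pos. assert (0 <= Rabs (a + b)) by apply Rabs_pos. nra.
Qed.

Definition LL k := AA k + 2 * BB k * qq k + 2 * DD k * qq k * INR k.

Lemma LL_pos k : 0 < LL k.
Proof. unfold LL. assert (H := AA_pos k). assert (H1 := BB_pos k). assert (H2 := DD_pos k).
  assert (H3 := qq_pos k). assert (0 <= INR k) by apply pos_INR.
  assert (0 < BB k * qq k) by nra. assert (0 < DD k * qq k) by nra.
  assert (0 <= DD k * qq k * INR k) by nra. lra. Qed.

Lemma w_lip k eps y x z d : eps > 0 -> d > 0 ->
  boxK (S k) (la k eps y) (lb k eps y) x -> boxK (S k) (la k eps y) (lb k eps y) z ->
  (forall j, (j < S k)%nat -> Rabs (z j - x j) < d) ->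
  Rabs (wB k eps y z - wB k eps y x) <= eps * LL k * d.
Proof.
  intros He Hd Hx Hz H. apply box_iff in Hx. apply box_iff in Hz.
  destruct Hx as [_ [Hx1 Hx2]]. destruct Hz as [_ [Hz1 Hz2]].
  unfold wB, LL.
  set (tz := z k + eps). set (tx := x k + eps).
  assert (Htd : Rabs (tz - tx) < d) by (unfold tz, tx; replace (z k + eps - (x k + eps)) with (z k - x k) by ring; apply H; lia).
  assert (Hq := qq_pos k).
  assert (Hsq : Rabs (tz ^ 2 - tx ^ 2) <= 2 * qq k * d).
  { apply sq_diff_bound; auto; apply Rabs_le; unfold tz, tx; lra. }
  assert (Hr : Rabs (rsum k (fun j => (z j - y j) ^ 2) - rsum k (fun j => (x j - y j) ^ 2)) <= INR k * (2 * qq k * d)).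
  { apply rsum_abs_diff. intros j Hj. apply sq_diff_bound; auto.
    replace (z j - y j - (x j - y j)) with (z j - x j) by ring. apply H. lia. }
  replace (eps * (AA k * tz - BB k * tz ^ 2 + DD k * rsum k (fun j => (z j - y j) ^ 2)) -
    eps * (AA k * tx - BB k * tx ^ 2 + DD k * rsum k (fun j => (x j - y j) ^ 2)))
   with (eps * (AA k * (tz - tx) - BB k * (tz ^ 2 - tx ^ 2) + DD k * (rsum k (fun j => (z j - y j) ^ 2) - rsum k (fun j => (x j - y j) ^ 2)))) by ring.
  rewrite Rabs_mult, (Rabs_right eps) by lra.
  rewrite Rmult_assoc.
  apply Rmult_le_compat_l; [lra|].
  assert (HA := AA_pos k). assert (HB := BB_pos k). assert (HD := DD_pos k).
  eapply Rle_trans. apply abs3.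
  rewrite !Rabs_mult, (Rabs_right (AA k)), (Rabs_right (BB k)), (Rabs_right (DD k)) by lra.
  assert (0 <= INR k) by apply pos_INR.
  assert (AA k * Rabs (tz - tx) <= AA k * d) by (apply Rmult_le_compat_l; lra).
  assert (BB k * Rabs (tz ^ 2 - tx ^ 2) <= BB k * (2 * qq k * d)) by (apply Rmult_le_compat_l; lra).
  assert (DD k * Rabs (rsum k (fun j => (z j - y j) ^ 2) - rsum k (fun j => (x j - y j) ^ 2)) <= DD k * (INR k * (2 * qq k * d))) by (apply Rmult_le_compat_l; lra).
  nra.
Qed.

Lemma w_line_lat k eps y x j : (j < k)%nat -> forall s,
  wB k eps y (shift x j s) = wB k eps y x + (eps * DD k * 2 * (x j - y j)) * s + (eps * DD k) * s ^ 2.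
Proof.
  intros Hj s. unfold wB. rewrite (shift_other x j s k) by lia.
  rewrite (rsum_single k (fun i => (x i - y i) ^ 2) (fun i => (shift x j s i - y i) ^ 2) j Hj).
  - rewrite shift_same. ring.
  - intros i Hi Hij. rewrite shift_other by auto. auto.
Qed.

Lemma w_line_top k eps y x s :
  wB k eps y (shift x k s) = wB k eps y x + (eps * (AA k - 2 * BB k * (x k + eps))) * s + (- eps * BB k) * s ^ 2.
Proof.
  unfold wB. rewrite shift_same.
  rewrite (rsum_ext k (fun i => (shift x k s i - y i) ^ 2) (fun i => (x i - y i) ^ 2)).
  - ring.
  - intros i Hi. rewrite shift_other by lia. auto.
Qed.

Lemma rsum_scal k c f : rsum k (fun i => c * f i) = c * rsum k f.
Proof. induction k; simpl; [ring|]. rewrite IHk. ring. Qed.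

Module MC.
Import all_boot all_order all_algebra all_classical all_reals all_analysis Rstruct Rstruct_topology.
Import Order.TTheory GRing.Theory Num.Theory.
Local Open Scope ring_scope.
Local Open Scope classical_set_scope.

Lemma box_max_mc (n : nat) (a b : nat -> R) (f : pt -> R) :
  (forall j, lt j n -> Rle (a j) (b j)) ->
  (forall x, boxK n a b x -> forall e, Rlt 0 e -> exists d, Rlt 0 d /\
     forall y, boxK n a b y -> (forall j, lt j n -> Rlt (Rabs (Rminus (y j) (x j))) d) ->
       Rlt (Rabs (Rminus (f y) (f x))) e) ->
  exists x, boxK n a b x /\ forall y, boxK n a b y -> Rle (f y) (f x).
Proof.
move=> hab hc.
pose toPt (v : 'rV[R]_n) : pt := fun j => oapp (fun i : 'I_n => v ord0 i) 0 (insub j).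
pose A := [set v : 'rV[R]_n | forall i : 'I_n, `[a i, b i]%classic (v ord0 i)].
have cA : compact A.
  apply: (@rV_compact _ n (fun i : 'I_n => `[a i, b i]%classic)) => i; exact: segment_compact.
have toPtK : forall v, A v -> boxK n a b (toPt v).
  move=> v Av; split.
    by move=> j /ssrnat.leP jn; rewrite /toPt insubF //; apply/negbTE; rewrite -leqNgt.
  move=> j /ssrnat.ltP jn; rewrite /toPt insubT /=.
  have := Av (Ordinal jn); rewrite /= in_itv /= => /andP [h1 h2].
  by split; apply/RleP.
have fromPt : forall y, boxK n a b y -> A (\row_i y (nat_of_ord i)) /\ toPt (\row_i y (nat_of_ord i)) = y.
  move=> y [yn yb]; split.
    move=> i; rewrite /= mxE in_itv /=.
    have [h1 h2] := yb _ (ssrnat.ltP (ltn_ord i)).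
    by apply/andP; split; apply/RleP.
  apply: boolp.funext => j; rewrite /toPt.
  case: insubP => [i _ <- | ]; first by rewrite /= mxE.
  by rewrite -leqNgt => /ssrnat.leP jn /=; rewrite yn.
have A0 : A !=set0.
  exists (\row_i a (nat_of_ord i)) => i; rewrite /= mxE in_itv /= lexx /=.
  by apply/RleP; apply: hab; apply/ssrnat.ltP.
have cF : {within A, continuous (f \o toPt)}.
  apply/subspace_continuousP => x Ax.
  apply/(@cvgrPdist_lt R R^o) => e e0.
  have e0' : Rlt 0 e by apply/RltP.
  have [d [d0 hd]] := hc _ (toPtK _ Ax) e e0'.
  rewrite /prop_near1 /within /=.
  apply/nbhs_ballP; exists d; first by apply/RltP.
  move=> y bxy Ay.
  rewrite -RabsE Rabs_minus_sym; apply/RltP; apply: hd; first exact: toPtK.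
  move=> j /ssrnat.ltP jn; rewrite /toPt insubT /=.
  case: bxy => _ /(_ ord0 (Ordinal jn)).
  rewrite /ball /= -RabsE Rabs_minus_sym => h; exact/RltP.
have [c Ac cmax] := compact_EVT_max A0 cA cF.
exists (toPt c); split; first by apply: toPtK; rewrite inE in Ac.
move=> y yK; have [Ay ey] := fromPt y yK.
rewrite -ey; apply/RleP; apply: cmax; by rewrite inE.
Qed.
End MC.

Lemma box_max (n : nat) (a b : nat -> R) (f : pt -> R) :
  (forall j, (j < n)%nat -> a j <= b j) ->
  (forall x, boxK n a b x -> forall e, e > 0 -> exists d, d > 0 /\
     forall y, boxK n a b y -> (forall j, (j < n)%nat -> Rabs (y j - x j) < d) ->
       Rabs (f y - f x) < e) ->
  exists x, boxK n a b x /\ forall y, boxK n a b y -> f y <= f x.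
Proof. exact (@MC.box_max_mc n a b f). Qed.


Lemma shift_0 x j : shift x j 0 = x.
Proof. apply functional_extensionality. intros i. unfold shift. destruct (Nat.eqb i j); ring. Qed.

Lemma mp k m U eps i sg y :
  eps > 0 -> (i < m)%nat -> (sg = 1 \/ sg = -1) ->
  cont_on (S k) (Bn (S k) 1) (fun x => U x i) ->
  harmonic_on (S k) (pos_set (S k) m U) (fun x => U x i) ->
  (forall x, Bn (S k) 1 x -> Rabs (U x i) <= eps) ->
  (forall x, Bn (S k) 1 x -> x k < - eps -> Uabs m U x = 0) ->
  Bn (S k) (3/4) y -> - eps <= y k < - eps + qq k ->
  sg * U y i <= wB k eps y y.
Proof.
  intros He Hi Hsg Hc Hh Hb Hz Hy Hyk.
  assert (Hq := qq_pos k).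
  assert (KB1 : forall x, boxK (S k) (la k eps y) (lb k eps y) x -> Bn (S k) 1 x).
  { intros x Hx. apply box_iff in Hx. destruct Hx as [Hx [H1 H2]]. apply (inB1 k y x Hy Hx).
    intros j Hj. destruct (Nat.lt_ge_cases j k) as [H|H].
    - specialize (H1 j H). lra.
    - replace j with k by lia. apply Rabs_le. lra. }
  assert (Hsgabs : forall a, sg * a <= Rabs a).
  { intros a. destruct Hsg; subst; unfold Rabs; destruct (Rcase_abs a); lra. }
  assert (Hsgabs2 : forall a, Rabs (sg * a) = Rabs a).
  { intros a. destruct Hsg; subst; unfold Rabs; destruct (Rcase_abs a), (Rcase_abs (_ * a)); lra. }
  destruct (box_max (S k) (la k eps y) (lb k eps y) (fun x => sg * U x i - wB k eps y x)) as [X [HXK HXmax]].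
  { intros j Hj. unfold la, lb. destruct (Nat.ltb j k); lra. }
  { intros x Hx e He'.
    destruct (Hc x (KB1 x Hx) (e/2) ltac:(lra)) as [d1 [Hd1 Hd1']].
    assert (HN := INR_S_pos k). assert (HL := LL_pos k).
    assert (0 < d1 / (2 * INR (S k))) by (apply Rdiv_lt_0_compat; lra).
    assert (0 < e / (2 * (eps * LL k + 1))) by (apply Rdiv_lt_0_compat; nra).
    set (d := Rmin (d1 / (2 * INR (S k))) (e / (2 * (eps * LL k + 1)))).
    assert (Hd0 : 0 < d) by (apply Rmin_glb_lt; auto).
    assert (Hda : d <= d1 / (2 * INR (S k))) by apply Rmin_l.
    assert (Hdb : d <= e / (2 * (eps * LL k + 1))) by apply Rmin_r.
    exists d. split; auto. intros z Hz0 Hzx.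
    assert (Hdist : dist (S k) z x < d1).
    { eapply Rlt_le_trans. apply (dist_coord (S k) x z d); [lia|lra|exact Hzx].
      replace d1 with (2 * INR (S k) * (d1 / (2 * INR (S k)))) by (field; lra).
      apply Rmult_le_compat_l; lra. }
    assert (HU := Hd1' z (KB1 z Hz0) Hdist).
    assert (HW := w_lip k eps y x z d He Hd0 Hx Hz0 Hzx).
    assert (Hed : eps * LL k * d < e / 2).
    { assert ((eps * LL k + 1) * d <= e / 2).
      { replace (e / 2) with ((eps * LL k + 1) * (e / (2 * (eps * LL k + 1)))) by (field; nra).
        apply Rmult_le_compat_l; nra. }
      nra. }
    replace (sg * U z i - wB k eps y z - (sg * U x i - wB k eps y x))
      with (sg * (U z i - U x i) - (wB k eps y z - wB k eps y x)) by ring.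
    unfold Rminus at 1. eapply Rle_lt_trans. apply Rabs_triang.
    rewrite Rabs_Ropp, Hsgabs2. lra.
  }
  assert (HyK : boxK (S k) (la k eps y) (lb k eps y) y).
  { apply box_iff. destruct Hy as [Hyn _]. split; auto. split; [|lra].
    intros j Hj. replace (y j - y j) with 0 by ring. rewrite Rabs_R0. lra. }
  destruct (Rle_dec (sg * U X i - wB k eps y X) 0) as [Hle|Hgt].
  { assert (H := HXmax y HyK). lra. }
  apply Rnot_le_lt in Hgt. exfalso.
  assert (HwX := w_nonneg k eps y X He HXK).
  assert (HUXne : 0 < Rabs (U X i)) by (assert (H := Hsgabs (U X i)); lra).
  assert (HX1 := KB1 X HXK).
  assert (HbX := Hb X HX1).
  assert (HsX := Hsgabs (U X i)).
  destruct (Req_dec (X k) (- eps + qq k)) as [Htop|Hntop].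
  { assert (H := w_top k eps y X He HXK Htop). lra. }
  pose proof HXK as HXK'. apply box_iff in HXK'. destruct HXK' as [HXn [HX1' HX2']].
  destruct (classic (exists j, (j < k)%nat /\ Rabs (X j - y j) = qq k)) as [[j [Hj Hja]]|Hnlat].
  { assert (H := w_lat k eps y X j He HXK Hj Hja). lra. }
  assert (Hlat : forall j, (j < k)%nat -> Rabs (X j - y j) < qq k).
  { intros j Hj. destruct (Rle_lt_or_eq_dec _ _ (HX1' j Hj)); auto.
    exfalso; apply Hnlat; eauto. }
  destruct (Req_dec (X k) (- eps)) as [Hbot|Hnbot].
  { destruct (Hc X HX1 (Rabs (U X i)) HUXne) as [d [Hd Hd']].
    set (dl := Rmin (d / 2) (qq k / 2)).
    assert (Hdl0 : 0 < dl) by (apply Rmin_glb_lt; lra).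
    assert (Hdl1 : dl <= d / 2) by apply Rmin_l.
    assert (Hdl2 : dl <= qq k / 2) by apply Rmin_r.
    set (Z := shift X k (- dl)).
    assert (HZ1 : Bn (S k) 1 Z).
    { apply (inB1 k y Z Hy). apply shift_inRn; auto.
      intros j Hj. unfold Z. destruct (Nat.eq_dec j k) as [->|Hjk].
      - rewrite shift_same. apply Rabs_le. lra.
      - rewrite shift_other by auto. assert (H := Hlat j ltac:(lia)). lra. }
    assert (HZ0 : Uabs m U Z = 0) by (apply Hz; auto; unfold Z; rewrite shift_same; lra).
    assert (HUZ : U Z i = 0).
    { assert (H := comp_le_norm m (U Z) i Hi). unfold Uabs in HZ0. rewrite HZ0 in H.
      revert H; unfold Rabs; destruct (Rcase_abs (U Z i)); lra. }
    assert (HdZ : dist (S k) Z X < d).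
    { unfold Z. rewrite dist_shift by lia. rewrite Rabs_Ropp, Rabs_right; lra. }
    specialize (Hd' Z HZ1 HdZ). rewrite HUZ, Rminus_0_l, Rabs_Ropp in Hd'. lra. }
  assert (HXk : - eps < X k < - eps + qq k) by lra.
  assert (HXpos : pos_set (S k) m U X).
  { split; auto. unfold Uabs. eapply Rlt_le_trans; [exact HUXne| apply comp_le_norm; auto]. }
  destruct Hh as [D1 [D2 [[_ [_ [_ [HD1 HD2]]]] Hlap]]].
  set (W2 := fun j => if Nat.ltb j k then 2 * eps * DD k else - 2 * eps * BB k).
  assert (Hsum : 0 < rsum (S k) (fun j => sg * D2 j j X - W2 j)).
  { rewrite rsum_minus, rsum_scal, (Hlap X HXpos).
    simpl (rsum (S k) W2).
    rewrite (rsum_ext k W2 (fun _ => 2 * eps * DD k)).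
    - rewrite rsum_const. unfold W2. rewrite Nat.ltb_irrefl. unfold BB. rewrite S_INR.
      assert (HD := DD_pos k). nra.
    - intros j Hj. unfold W2. apply Nat.ltb_lt in Hj. rewrite Hj. auto. }
  destruct (rsum_pos_exists _ _ Hsum) as [j [Hj Hjpos]].
  assert (Hline : exists b c, (forall s, wB k eps y (shift X j s) = wB k eps y X + b * s + c * s ^ 2) /\ 2 * c = W2 j).
  { destruct (Nat.lt_ge_cases j k) as [Hjk|Hjk].
    - exists (eps * DD k * 2 * (X j - y j)), (eps * DD k). split.
      + apply w_line_lat; auto.
      + unfold W2. apply Nat.ltb_lt in Hjk. rewrite Hjk. ring.
    - replace j with k by lia. exists (eps * (AA k - 2 * BB k * (X k + eps))), (- eps * BB k). split.
      + apply w_line_top.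
      + unfold W2. rewrite Nat.ltb_irrefl. ring. }
  destruct Hline as [b [c [Hwl Hc2]]].
  assert (HK : exists dK, dK > 0 /\ forall s, Rabs s < dK -> boxK (S k) (la k eps y) (lb k eps y) (shift X j s)).
  { destruct (Nat.lt_ge_cases j k) as [Hjk|Hjk].
    - exists (qq k - Rabs (X j - y j)). split. assert (H := Hlat j Hjk). lra.
      intros s Hs. apply box_iff. split; [apply shift_inRn; auto|]. split.
      + intros i0 Hi0. destruct (Nat.eq_dec i0 j) as [->|Hij].
        * rewrite shift_same. replace (X j + s - y j) with ((X j - y j) + s) by ring.
          eapply Rle_trans. apply Rabs_triang. lra.
        * rewrite shift_other by auto. auto.
      + rewrite shift_other by lia. lra.
    - replace j with k by lia. exists (Rmin (X k + eps) (- eps + qq k - X k)). split.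
      apply Rmin_glb_lt; lra.
      intros s Hs. assert (H1 := Rmin_l (X k + eps) (- eps + qq k - X k)).
      assert (H2 := Rmin_r (X k + eps) (- eps + qq k - X k)).
      apply Rlt_le, abs_le_inv in Hs.
      apply box_iff. split; [apply shift_inRn; auto|]. split.
      + intros i0 Hi0. rewrite shift_other by lia. auto.
      + rewrite shift_same. lra. }
  destruct HK as [dK [HdK HK]].
  destruct (Hc X HX1 (Rabs (U X i)) HUXne) as [dP [HdP HdP']].
  assert (HP : forall s, Rabs s < Rmin dK dP -> pos_set (S k) m U (shift X j s)).
  { intros s Hs. assert (H1 := Rmin_l dK dP). assert (H2 := Rmin_r dK dP).
    assert (HKs := HK s ltac:(lra)). split; [apply KB1; auto|].
    assert (Hd : dist (S k) (shift X j s) X < dP) by (rewrite dist_shift by lia; lra).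
    assert (H := HdP' _ (KB1 _ HKs) Hd).
    assert (H3 := comp_le_norm m (U (shift X j s)) i Hi). unfold Uabs.
    assert (U (shift X j s) i <> 0).
    { intros H0. rewrite H0, Rminus_0_l, Rabs_Ropp in H. lra. }
    assert (0 < Rabs (U (shift X j s) i)) by (apply Rabs_pos_lt; auto). lra. }
  apply (oneD (fun s => sg * U (shift X j s) i - wB k eps y (shift X j s))
              (fun s => sg * D1 j (shift X j s) - (b + 2 * c * s)) (Rmin dK dP) (sg * D2 j j X - W2 j)).
  - apply Rmin_glb_lt; lra.
  - lra.
  - intros s Hs.
    assert (Hder := HD1 (shift X j s) (HP s Hs) j Hj). unfold has_partial in Hder.
    assert (Hder' : derivable_pt_lim (fun t => U (shift X j t) i) s (D1 j (shift X j s))).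
    { apply deriv_translate.
      replace (fun t => U (shift X j (s + t)) i) with (fun t => U (shift (shift X j s) j t) i); auto.
      apply functional_extensionality. intros t. rewrite shift_shift. auto. }
    replace (fun s0 => sg * U (shift X j s0) i - wB k eps y (shift X j s0))
      with (fun s0 => sg * U (shift X j s0) i - (wB k eps y X + b * s0 + c * s0 ^ 2)).
    + apply (derivable_pt_lim_minus (fun s0 => sg * U (shift X j s0) i) (fun s0 => wB k eps y X + b * s0 + c * s0 ^ 2)).
      * apply (derivable_pt_lim_scal (fun s0 => U (shift X j s0) i)). auto.
      * apply deriv_quad.
    + apply functional_extensionality. intros t. rewrite Hwl. auto.
  - intros s Hs. rewrite shift_0. apply HXmax. apply HK. assert (H1 := Rmin_l dK dP). lra.
  - replace (sg * D2 j j X - W2 j) with (sg * D2 j j X - (2 * c + 2 * 0 * 0)) by lra.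
    apply (derivable_pt_lim_minus (fun s0 => sg * D1 j (shift X j s0)) (fun s0 => b + 2 * c * s0)).
    + apply (derivable_pt_lim_scal (fun s0 => D1 j (shift X j s0))). apply (HD2 X HXpos j j Hj Hj).
    + replace (fun s0 => b + 2 * c * s0) with (fun s0 => b + 2 * c * s0 + 0 * s0 ^ 2)
        by (apply functional_extensionality; intros; ring).
      apply deriv_quad.
Qed.


Theorem lemma2p2 : forall n m : nat, (1 <= n)%nat -> (1 <= m)%nat ->
  exists C : R, C > 0 /\
  forall (U : pt -> pt) (eps : R),
    viscosity_solution n m U -> eps > 0 ->
    (forall x, Bn n 1 x ->
       norm m (fun j => U x j - e1 j * Rmax (x (n - 1)%nat) 0) <= eps) ->
    (forall x, Bn n 1 x -> x (n - 1)%nat < - eps -> Uabs m U x = 0) ->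
    (forall i x, (1 <= i < m)%nat -> Bn n (3/4) x ->
       Rabs (U x i) <= C * eps * Rmax (x (n - 1)%nat + eps) 0) /\
    (forall x, Bn n 1 x ->
       x (n - 1)%nat - eps <= U x 0%nat /\ U x 0%nat <= Uabs m U x /\
       Uabs m U x <= Rmax (x (n - 1)%nat + 2 * eps) 0).
Proof.
  intros n m Hn Hm. destruct n as [|k]; [lia|]. replace (S k - 1)%nat with k by lia.
  exists (AA k). split; [apply AA_pos|].
  intros U eps HV He Hnorm Hzero.
  destruct HV as [Hcont [Hharm _]].
  assert (HA := AA_pos k). assert (Hq := qq_pos k).
  assert (Hcomp : forall x i, Bn (S k) 1 x -> (1 <= i < m)%nat -> Rabs (U x i) <= eps).
  { intros x i Hx Hi. specialize (Hnorm x Hx).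
    assert (H := comp_le_norm m (fun j => U x j - e1 j * Rmax (x k) 0) i ltac:(lia)).
    cbv beta in H. replace (e1 i) with 0 in H by (unfold e1; destruct (Nat.eqb_spec i 0); [lia|auto]).
    rewrite Rmult_0_l, Rminus_0_r in H. lra. }
  split.
  - intros i x Hi Hx.
    assert (Hx1 := B34_B1 _ _ Hx).
    assert (HR : 0 <= AA k * eps * Rmax (x k + eps) 0).
    { assert (0 <= Rmax (x k + eps) 0) by apply Rmax_r. apply Rmult_le_pos; nra. }
    destruct (Rlt_dec (x k + eps) 0) as [Hneg|Hnneg].
    + assert (H0 := Hzero x Hx1 ltac:(lra)).
      assert (H := comp_le_norm m (U x) i ltac:(lia)). unfold Uabs in H0. lra.
    + rewrite Rmax_left by lra.
      destruct (Rlt_dec (x k + eps) (qq k)) as [Hsmall|Hbig].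
      * assert (Hw : wB k eps x x <= AA k * eps * (x k + eps)).
        { unfold wB. rewrite (rsum_ext k (fun j => (x j - x j) ^ 2) (fun _ => 0)) by (intros; ring).
          rewrite rsum_zero. assert (HB := BB_pos k).
          assert (0 <= eps * (BB k * (x k + eps) ^ 2)) by (apply Rmult_le_pos; [lra|]; apply Rmult_le_pos; [lra|apply pow2_ge_0]).
          nra. }
        assert (H1 := mp k m U eps i 1 x He ltac:(lia) ltac:(auto) (Hcont i ltac:(lia)) (Hharm i ltac:(lia))
                   (fun z hz => Hcomp z i hz Hi) Hzero Hx ltac:(lra)).
        assert (H2 := mp k m U eps i (-1) x He ltac:(lia) ltac:(auto) (Hcont i ltac:(lia)) (Hharm i ltac:(lia))
                   (fun z hz => Hcomp z i hz Hi) Hzero Hx ltac:(lra)).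
        apply Rabs_le. lra.
      * assert (H := Hcomp x i Hx1 Hi).
        assert (HAq := AA_ge k).
        assert (AA k * qq k <= AA k * (x k + eps)) by (apply Rmult_le_compat_l; lra).
        nra.
  - intros x Hx. specialize (Hnorm x Hx).
    set (a := Rmax (x k) 0) in *.
    set (V := fun j => U x j - e1 j * a) in *.
    assert (HV0 := comp_le_norm m V 0 ltac:(lia)).
    assert (HV0e : V 0%nat = U x 0%nat - a) by (unfold V, e1; simpl; ring).
    assert (Ha1 : x k <= a) by apply Rmax_l. assert (Ha2 : 0 <= a) by apply Rmax_r.
    assert (HU0 := comp_le_norm m (U x) 0 ltac:(lia)).
    split; [|split].
    + apply abs_le_inv in HV0. lra.
    + unfold Uabs. eapply Rle_trans; [apply Rle_abs|]. auto.
    + destruct (Rlt_dec (x k) (- eps)) as [Hlt|Hge].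
      * rewrite (Hzero x Hx Hlt). apply Rmax_r.
      * rewrite Rmax_left by lra.
        assert (Hsum : rsum m (fun j => U x j ^ 2) = rsum m (fun j => V j ^ 2) - V 0%nat ^ 2 + (V 0%nat + a) ^ 2).
        { rewrite (rsum_single m (fun j => V j ^ 2) (fun j => U x j ^ 2) 0%nat).
          - rewrite HV0e. ring.
          - lia.
          - intros j Hj Hj0. unfold V. replace (e1 j) with 0 by (unfold e1; destruct (Nat.eqb_spec j 0); [lia|auto]). ring. }
        assert (HSV : rsum m (fun j => V j ^ 2) <= eps ^ 2).
        { apply sq_le_of_sqrt; [apply rsum_nonneg; intros; apply pow2_ge_0|]. exact Hnorm. }
        assert (HV0b : V 0%nat <= eps) by (eapply Rle_trans; [apply Rle_abs|lra]).
        assert (Hfin : Uabs m U x <= a + eps).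
        { unfold Uabs, norm. rewrite Hsum. rewrite <- (sqrt_pow2 (a + eps)) by lra.
          apply sqrt_le_1_alt. nra. }
        unfold a in Hfin. destruct (Rle_dec 0 (x k)).
        -- rewrite Rmax_left in Hfin by lra. lra.
        -- rewrite Rmax_right in Hfin by lra. lra.
Qed.
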